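(* Let $G=(V,E)$ be a finite weakly connected directed multigraph (loops allowed) in which every vertex has even degree, and let $M=(M_e)_{e\in E}$ with $M_e\in M_n(\mathbb C)$. Then $$|T_G(M)|\le n\prod_{e\in E}\|M_e\|.$$ Moreover, if $f\in E$ and $M_f$ has rank $r$, then $$|T_G(M)|\le\sqrt{rn}\prod_{e\in E}\|M_e\|.$$
   Context: A directed multigraph $G=(V,E)$ consists of finite sets $V,E$ and maps $e\mapsto e_-$ (origin) and $e\mapsto e_+$ (terminus) from $E$ to $V$; $e_-=e_+$ is allowed. Weakly connected means connected after forgetting orientations. The degree of $v$ is $\deg(v)=\sum_{e\in E}(\mathbf 1(v=e_-)+\mathbf 1(v=e_+))$. For $M=(M_e)_{e\in E}$, $$T_G(M)=\sum_{\mathbf i=(i_v)_{v\in V}\in\{1,\dots,n\}^V}\ \prod_{e\in E}(M_e)_{i_{e_-}i_{e_+}}.$$ $\|\cdot\|$ is the operator norm. *)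

(* Defs.v *)
From HB Require Import structures.
From mathcomp Require Import all_boot all_order all_algebra.
From mathcomp Require Import classical_sets reals complex.
Set Implicit Arguments. Unset Strict Implicit. Unset Printing Implicit Defensive.
Import Order.TTheory GRing.Theory Num.Theory.
Local Open Scope ring_scope.

Definition cmod (R : realType) (z : R[i]) : R := Normc.normc z.

Definition vnorm (R : realType) (n : nat) (x : 'cV[R[i]]_n) : R :=
  Num.sqrt (\sum_(k < n) cmod (x k 0) ^+ 2).

Definition opnorm (R : realType) (n : nat) (A : 'M[R[i]]_n) : R :=
  sup [set y : R | exists x : 'cV[R[i]]_n, vnorm x <= 1 /\ y = vnorm (A *m x)].

(* A directed multigraph: finite vertex set V, finite edge set E,
   origin map src and terminus map tgt (loops allowed). *)

Definition und_adj (V E : finType) (src tgt : E -> V) : rel V :=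
  fun u v => [exists e, ((src e == u) && (tgt e == v)) || ((src e == v) && (tgt e == u))].

Definition weakly_connected (V E : finType) (src tgt : E -> V) : Prop :=
  (0 < #|V|)%N /\ forall u v : V, connect (und_adj src tgt) u v.

(* deg v = sum_e (1(v = e_-) + 1(v = e_+)); a loop contributes 2. *)
Definition deg (V E : finType) (src tgt : E -> V) (v : V) : nat :=
  (#|[set e | src e == v]| + #|[set e | tgt e == v]|)%N.

Definition TG (R : realType) (V E : finType) (src tgt : E -> V) (n : nat)
  (M : E -> 'M[R[i]]_n) : R[i] :=
  \sum_(i : {ffun V -> 'I_n}) \prod_(e : E) M e (i (src e)) (i (tgt e)).

(* Main.v *)
Require Import Defs.
From HB Require Import structures.
From mathcomp Require Import all_boot all_order all_algebra.
From mathcomp Require Import zify.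
Import Order.TTheory GRing.Theory Num.Theory.
Set Implicit Arguments. Unset Strict Implicit. Unset Printing Implicit Defensive.
Local Open Scope ring_scope.

Section SO.
Variables (V : finType) (n : nat).
Local Notation Sg := {ffun V -> 'I_n}.
Implicit Types (S : {set V}) (s t : Sg) (v u : V) (c : 'I_n).

Definition agree (S : {set V}) (s t : Sg) := [forall u, (u \notin S) ==> (t u == s u)].
Definition SO (T : nmodType) (S : {set V}) (s : Sg) (F : Sg -> T) :=
  \sum_(t | agree S s t) F t.
Definition upd (s : Sg) v c : Sg := [ffun u => if u == v then c else s u].

Lemma agreeP S s t : reflect (forall u, u \notin S -> t u = s u) (agree S s t).
Proof.
apply: (iffP forallP) => [h u uS|h u]; first by move: (h u); rewrite uS => /eqP.
by apply/implyP => uS; rewrite h.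
Qed.

Lemma updE s v c u : upd s v c u = if u == v then c else s u.
Proof. by rewrite ffunE. Qed.

Lemma upd_same s v c : upd s v c v = c.
Proof. by rewrite updE eqxx. Qed.

Lemma upd_other s v c u : u != v -> upd s v c u = s u.
Proof. by rewrite updE => /negbTE ->. Qed.

Lemma upd_upd s v c c' : upd (upd s v c) v c' = upd s v c'.
Proof. by apply/ffunP => u; rewrite !updE; case: eqP. Qed.

Lemma upd_id s v c : s v = c -> upd s v c = s.
Proof. by move=> <-; apply/ffunP => u; rewrite !updE; case: eqP => // ->. Qed.

Lemma upd_comm s v w c d : v != w -> upd (upd s v c) w d = upd (upd s w d) v c.
Proof.
move=> vw; apply/ffunP => u; rewrite !updE.
by case: (eqVneq u w) => [->|//]; rewrite eq_sym (negbTE vw).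
Qed.

Lemma agree_out S s t u : agree S s t -> u \notin S -> t u = s u.
Proof. by move/agreeP => h; apply: h. Qed.

Lemma agree_refl S s : agree S s s.
Proof. by apply/agreeP. Qed.

Section T.
Variable T : nmodType.

Lemma SO0 s (F : Sg -> T) : SO set0 s F = F s.
Proof.
rewrite /SO (big_pred1 s) // => t /=.
apply/idP/eqP => [/agreeP h|->]; last exact: agree_refl.
by apply/ffunP => u; rewrite h ?inE.
Qed.

Lemma agree_upd S s v c t : v \notin S ->
  agree S (upd s v c) t = agree (v |: S) s t && (t v == c).
Proof.
move=> vS; apply/idP/andP => [/agreeP h|[/agreeP h /eqP tv]].
  split; last by rewrite h // upd_same.
  apply/agreeP => u; rewrite in_setU1 negb_or => /andP[uv uS].
  by rewrite h // upd_other.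
apply/agreeP => u uS; case: (eqVneq u v) => [->|uv]; first by rewrite upd_same.
by rewrite upd_other // h // in_setU1 negb_or uv.
Qed.

Lemma SO_add S s v (F : Sg -> T) : v \notin S ->
  SO (v |: S) s F = \sum_c SO S (upd s v c) F.
Proof.
move=> vS; rewrite /SO.
under [RHS]eq_bigr do rewrite big_mkcond.
rewrite exchange_big /= big_mkcond; apply: eq_bigr => t _.
under eq_bigr do rewrite agree_upd //.
rewrite (bigD1 (t v)) //= eqxx andbT big1 ?addr0 // => c cne.
by rewrite eq_sym (negbTE cne) andbF.
Qed.

Lemma SO_upd S s v c (F : Sg -> T) : v \notin S ->
  SO S (upd s v c) F = SO S s (fun t => F (upd t v c)).
Proof.
move=> vS; rewrite /SO.
rewrite (reindex_onto (fun t => upd t v c) (fun t => upd t v (s v))); last first.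
  move=> t /agreeP h; rewrite upd_upd upd_id //; rewrite h // upd_same //.
apply: eq_bigl => t; rewrite upd_upd.
apply/andP/idP => [[/agreeP h /eqP e]|/agreeP h]; last first.
  split; last by apply/eqP; apply: upd_id; rewrite h.
  apply/agreeP => u uS; rewrite !updE; case: eqP => // _; exact: h.
apply/agreeP => u uS; case: (eqVneq u v) => [->|uv].
  by rewrite -{1}e upd_same.
by move: (h u uS); rewrite !upd_other.
Qed.

Lemma SO_ext S s (F G : Sg -> T) : (forall t, agree S s t -> F t = G t) ->
  SO S s F = SO S s G.
Proof. by move=> h; apply: eq_bigr. Qed.

Lemma SO_sum (I : finType) S s (F : Sg -> I -> T) :
  SO S s (fun t => \sum_i F t i) = \sum_i SO S s (fun t => F t i).
Proof. by rewrite /SO exchange_big. Qed.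

End T.

Lemma SO_mull (K : pzSemiRingType) S s (F : Sg -> K) (c : K) :
  SO S s (fun t => c * F t) = c * SO S s F.
Proof. by rewrite /SO mulr_sumr. Qed.

Lemma SO_mulr (K : pzSemiRingType) S s (F : Sg -> K) (c : K) :
  SO S s (fun t => F t * c) = SO S s F * c.
Proof. by rewrite /SO mulr_suml. Qed.

Lemma SO_le (K : numDomainType) S s (F G : Sg -> K) :
  (forall t, agree S s t -> F t <= G t) -> SO S s F <= SO S s G.
Proof. by move=> h; apply: ler_sum. Qed.

Lemma SO_ge0 (K : numDomainType) S s (F : Sg -> K) :
  (forall t, 0 <= F t) -> 0 <= SO S s F.
Proof. by move=> h; apply: sumr_ge0. Qed.

Lemma SO_setT (T : nmodType) s (F : Sg -> T) : SO setT s F = \sum_t F t.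
Proof. by apply: eq_bigl => t; apply/agreeP => u; rewrite inE. Qed.

End SO.


Section Euler.
Variables (V E : finType) (src tgt : E -> V).

Definition dart := (E * bool)%type.
Definition tl (d : dart) := if d.2 then src d.1 else tgt d.1.
Definition hd (d : dart) := if d.2 then tgt d.1 else src d.1.
Fixpoint walk (x : V) (s : seq dart) : bool :=
  if s is d :: s' then (tl d == x) && walk (hd d) s' else true.
Definition endv x (s : seq dart) := last x (map hd s).

Lemma walk_cat x s1 s2 : walk x (s1 ++ s2) = walk x s1 && walk (endv x s1) s2.
Proof. by elim: s1 x => [|d s1 IH] x //=; rewrite IH andbA. Qed.

Lemma endv_cat x s1 s2 : endv x (s1 ++ s2) = endv (endv x s1) s2.
Proof. by rewrite /endv map_cat last_cat. Qed.

Lemma endv_rcons x s d : endv x (rcons s d) = hd d.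
Proof. by rewrite /endv map_rcons last_rcons. Qed.

Definition degL (l : seq E) v :=
  (count (fun e => src e == v) l + count (fun e => tgt e == v) l)%N.

Lemma degE v : deg src tgt v = degL (index_enum E) v.
Proof. by rewrite /deg /degL -!sum1dep_card !sum1_count. Qed.

Lemma parity x s v : walk x s ->
  odd (degL (map fst s) v) = (v == x) (+) (v == endv x s).
Proof.
elim: s x => [|d s IH] x /=; first by rewrite addbb.
move=> /andP[/eqP tx ws]; have IH' := IH _ ws; rewrite /degL in IH'.
have -> : endv x (d :: s) = endv (hd d) s by [].
rewrite /degL /= addnACA oddD IH'.
have key : odd ((src d.1 == v) + (tgt d.1 == v)) = (v == x) (+) (v == hd d).
  rewrite -tx /tl /hd; case: d.2; rewrite oddD ![v == _]eq_sym;
  by case: (src d.1 == v); case: (tgt d.1 == v).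
rewrite key; by case: (v == x); case: (v == hd d); case: (v == endv _ _).
Qed.

Lemma count_split (T : Type) (P a : pred T) (s : seq T) :
  count P s = (count (fun x => P x && a x) s + count (fun x => P x && ~~ a x) s)%N.
Proof.
elim: s => //= x s ->; case: (P x); case: (a x) => /=; rewrite ?add0n ?add1n ?addnS ?addSn //.
Qed.

Lemma count_in (P : pred E) (l : seq E) : uniq l ->
  count (fun e => P e && (e \in l)) (index_enum E) = count P l.
Proof.
move=> ul; rewrite -(count_filter P (mem l)); apply/permP.
apply: uniq_perm; rewrite ?filter_uniq ?index_enum_uniq // => e.
by rewrite mem_filter mem_index_enum andbT.
Qed.

Lemma odd_unused (l : seq E) v : uniq l -> ~~ odd (deg src tgt v) ->
  odd (degL l v) -> exists e, (e \notin l) && ((src e == v) || (tgt e == v)).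
Proof.
move=> ul ev od.
case: (boolP [exists e, (e \notin l) && ((src e == v) || (tgt e == v))]).
  by move/existsP.
rewrite negb_exists => /forallP h; exfalso; move: ev; rewrite degE /degL.
rewrite (count_split _ (mem l) (index_enum E)) (count_split (fun e => tgt e == v) (mem l)).
rewrite !count_in //.
rewrite (@eq_count _ (fun x => (src x == v) && (x \notin l)) pred0); last first.
  by move=> e /=; move: (h e); case: (src e == v); case: (e \in l).
rewrite (@eq_count _ (fun x => (tgt x == v) && (x \notin l)) pred0); last first.
  by move=> e /=; move: (h e); rewrite orbC; case: (tgt e == v); case: (e \in l).
by rewrite count_pred0 !addn0 -/(degL l v) od.
Qed.

Definition trail x s := walk x s && uniq (map fst s).

Lemma W_split x s v : v \in x :: map hd s -> exists p1 p2, s = p1 ++ p2 /\ endv x p1 = v.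
Proof.
elim: s x => [|d s IH] x; first by rewrite inE => /eqP ->; exists [::], [::].
rewrite inE => /orP[/eqP ->|]; first by exists [::], (d :: s).
move=> /IH [p1 [p2 [-> e]]]; by exists (d :: p1), p2.
Qed.

Lemma tl_in x s d : walk x s -> d \in s -> tl d \in x :: map hd s.
Proof.
elim: s x => [|d' s IH] x //= /andP[/eqP tx ws]; rewrite inE => /orP[/eqP->|ds].
  by rewrite tx mem_head.
by move: (IH _ ws ds); rewrite !inE => /orP[->|->]; rewrite ?orbT.
Qed.

Lemma rotate x p1 p2 : walk x (p1 ++ p2) -> endv x (p1 ++ p2) = x ->
  walk (endv x p1) (p2 ++ p1) /\ endv (endv x p1) (p2 ++ p1) = endv x p1.
Proof.
rewrite walk_cat endv_cat => /andP[w1 w2] e; split.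
  by rewrite walk_cat w2 e w1.
by rewrite endv_cat e.
Qed.

Lemma perm_rot (p1 p2 : seq dart) : perm_eq (map fst (p2 ++ p1)) (map fst (p1 ++ p2)).
Proof. by rewrite !map_cat perm_catC. Qed.

Hypothesis conn : forall u v, connect (und_adj src tgt) u v.
Hypothesis even : forall v, ~~ odd (deg src tgt v).

Lemma touch_unused x s e0 : walk x s -> e0 \notin map fst s ->
  exists e v, [/\ e \notin map fst s, v \in x :: map hd s & (src e == v) || (tgt e == v)].
Proof.
move=> ws e0n; set l := map fst s; pose W := [pred v | v \in x :: map hd s].
case: (boolP [exists e, (e \notin l) && ((src e \in W) || (tgt e \in W))]).
  move/existsP => [e /andP[en /orP[h|h]]]; [exists e, (src e) | exists e, (tgt e)];
  by split => //; rewrite eqxx ?orbT.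
rewrite negb_exists => /forallP h; exfalso.
have endW : forall g, g \in l -> (src g \in W) && (tgt g \in W).
  move=> g /mapP [d ds ->]; have t1 := tl_in ws ds.
  have h1 : hd d \in W by rewrite /= inE map_f ?orbT.
  by move: t1 h1; rewrite /tl /hd /= ; case: d.2 => -> ->.
have clW : closed (und_adj src tgt) W.
  move=> u v /existsP [g hg].
  case: (boolP (g \in l)) => gl.
    move: (endW g gl) => /andP[a b].
    by case/orP: hg => /andP[/eqP <- /eqP <-]; rewrite a b.
  move: (h g); rewrite gl /= negb_or => /andP[a b].
  by case/orP: hg => /andP[/eqP su /eqP tv]; move: a b; rewrite su tv => /negbTE -> /negbTE ->.
have allW : forall v, v \in W by move=> v; rewrite -(closed_connect clW (conn x v)) /= mem_head.
by move: (h e0); rewrite e0n /= allW.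
Qed.

Lemma step x s : trail x s ->
  (endv x s = x /\ forall e, e \in map fst s) \/
  exists x' s', trail x' s' /\ size s' = (size s).+1.
Proof.
move=> /andP[ws us].
case: (eqVneq (endv x s) x) => [ex|nx]; last first.
  right; set y := endv x s.
  have od : odd (degL (map fst s) y) by rewrite (parity _ ws) eqxx (negbTE nx).
  have [e /andP[en ey]] := odd_unused us (even y) od.
  pose d : dart := (e, src e == y).
  have tld : tl d = y by rewrite /tl /=; case: ifP => [/eqP//|ne]; move: ey; rewrite ne => /eqP.
  exists x, (rcons s d); split; last by rewrite size_rcons.
  by rewrite /trail -cats1 walk_cat ws /= tld eqxx map_cat cats1 rcons_uniq en us.
case: (boolP [forall e, e \in map fst s]) => [/forallP h|]; first by left.
rewrite negb_forall => /existsP [e0 e0n]; right.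
have [e [v [en vW ev]]] := touch_unused ws e0n.
have [p1 [p2 [sp ep]]] := W_split vW.
move: ws ex us en; rewrite sp => ws ex us en.
have [w2 e2] := rotate ws ex; rewrite ep in w2 e2.
pose d : dart := (e, src e == v).
have tld : tl d = v by rewrite /tl /=; case: ifP => [/eqP//|ne]; move: ev; rewrite ne => /eqP.
exists v, (rcons (p2 ++ p1) d); split; last by rewrite size_rcons !size_cat addnC.
rewrite /trail -cats1 walk_cat w2 e2 /= tld eqxx map_cat cats1 rcons_uniq.
by rewrite (perm_uniq (perm_rot p1 p2)) (perm_mem (perm_rot p1 p2)) en us.
Qed.

Lemma trail_size x s : trail x s -> (size s <= #|E|)%N.
Proof.
move=> /andP[_ us]; rewrite -(size_map fst) -(card_uniqP us); exact: max_card.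
Qed.

Lemma euler_ind k x s : (#|E| - size s <= k)%N -> trail x s ->
  exists x' s', [/\ trail x' s', endv x' s' = x' & forall e, e \in map fst s'].
Proof.
elim: k x s => [|k IH] x s hk ts.
  case: (step ts) => [[e1 e2]|[x' [s' [ts' ss']]]]; first by exists x, s.
  by move: (trail_size ts'); rewrite ss' => h; exfalso; lia.
case: (step ts) => [[e1 e2]|[x' [s' [ts' ss']]]]; first by exists x, s.
apply: (IH x' s') => //.
have h := trail_size ts'; rewrite ss' in h.
by rewrite ss'; lia.
Qed.

Lemma euler_exists (f : E) :
  exists x (s : seq dart), [/\ walk x s, endv x s = x, uniq (map fst s),
    (forall e, e \in map fst s) & exists d s', s = d :: s' /\ d.1 = f].
Proof.
have t0 : trail (src f) [:: (f, true)] by rewrite /trail /= /tl /= !eqxx.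
have [x [s [/andP[ws us] ex allin]]] := euler_ind (leqnn _) t0.
have /mapP [d ds df] := allin f.
case/splitPr: ds ws ex us allin => p1 p2 ws ex us allin.
have [w2 e2] := rotate ws ex.
exists (endv x p1), (d :: p2 ++ p1); split.
- exact: w2.
- exact: e2.
- by move: us; rewrite -(perm_uniq (perm_rot p1 (d :: p2))).
- by move=> e; rewrite (perm_mem (perm_rot p1 (d :: p2))).
- by exists d, (p2 ++ p1).
Qed.

End Euler.

From mathcomp Require Import classical_sets reals complex.
From mathcomp Require Import ring lra sesquilinear spectral.
Import Order.TTheory GRing.Theory Num.Theory.
Local Open Scope ring_scope.
Local Open Scope complex_scope.

Section Cplx.
Variable R : realType.
Local Notation C := R[i].

Definition c2 (z : C) : R := cmod z ^+ 2.

Lemma cmod_ge0 (z : C) : 0 <= cmod z.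
Proof. by case: z => a b; rewrite /cmod /=; apply: sqrtr_ge0. Qed.

Lemma cmodE (z : C) : `|z| = (cmod z)%:C.
Proof. by case: z => a b; rewrite normc_def. Qed.

Lemma c2E (z : C) : (c2 z)%:C = z * z^*.
Proof. by rewrite /c2 rmorphXn /= -cmodE normCK. Qed.

Lemma c2_ge0 z : 0 <= c2 z.
Proof. by rewrite /c2 sqr_ge0. Qed.

Lemma cmodM (x y : C) : cmod (x * y) = cmod x * cmod y.
Proof. exact: Normc.normcM. Qed.

Lemma c2M x y : c2 (x * y) = c2 x * c2 y.
Proof. by rewrite /c2 cmodM exprMn. Qed.

Lemma cmodD (x y : C) : cmod (x + y) <= cmod x + cmod y.
Proof. exact: le_normcD. Qed.

Lemma cmod0 : cmod (0 : C) = 0.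
Proof. exact: Normc.normc0. Qed.

Lemma c20 : c2 0 = 0.
Proof. by rewrite /c2 cmod0 expr0n. Qed.

Lemma cmod_sum (I : Type) (r : seq I) (F : I -> C) :
  cmod (\sum_(i <- r) F i) <= \sum_(i <- r) cmod (F i).
Proof.
elim: r => [|a r IH]; first by rewrite !big_nil cmod0.
rewrite !big_cons; apply: le_trans (cmodD _ _) _; exact: lerD.
Qed.

Lemma cmodR (r : R) : cmod (r%:C) = `|r|.
Proof. by rewrite /cmod /= expr0n addr0 sqrtr_sqr. Qed.

Lemma c2R (r : R) : c2 (r%:C) = r ^+ 2.
Proof. by rewrite /c2 cmodR real_normK // num_real. Qed.

Lemma c2J (z : C) : c2 (z^*) = c2 z.
Proof. by case: z => a b; rewrite /c2 /cmod /= sqrrN. Qed.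

Lemma c2_eq0 z : (c2 z == 0) = (z == 0).
Proof.
apply/idP/idP => [|/eqP->]; last by rewrite c20.
rewrite /c2 expf_eq0 /= => /eqP h; apply/eqP; exact: Normc.eq0_normc.
Qed.

Lemma CS (I : finType) (a b : I -> R) :
  (\sum_i a i * b i) ^+ 2 <= (\sum_i a i ^+ 2) * (\sum_i b i ^+ 2).
Proof.
set A := \sum_i a i ^+ 2; set B := \sum_i b i ^+ 2; set X := \sum_i a i * b i.
have A0 : 0 <= A by apply: sumr_ge0 => i _; exact: sqr_ge0.
have key : 0 <= A * (A * B - X ^+ 2).
  have -> : A * (A * B - X ^+ 2) = \sum_i (A * b i - X * a i) ^+ 2.
    transitivity (\sum_i (A ^+ 2 * b i ^+ 2 - (2%:R * A * X) * (a i * b i) + X ^+ 2 * a i ^+ 2)).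
      rewrite big_split /= sumrB -!mulr_sumr -/A -/B -/X.
      rewrite /GRing.exp /=; ring.
    by apply: eq_bigr => i _; ring.
  by apply: sumr_ge0 => i _; exact: sqr_ge0.
have [A0'|Apos] := eqVneq A 0.
  have az : forall i, a i = 0.
    move=> i; have := (@psumr_eq0P _ _ predT (fun i => a i ^+ 2)) (fun i _ => sqr_ge0 (a i)) A0' i isT.
    by move/eqP; rewrite expf_eq0 /= => /eqP.
  rewrite /X big1 ?expr0n ?A0' ?mul0r //= => i _; by rewrite az mul0r.
have Ap : 0 < A by rewrite lt_def Apos A0.
by move: key; rewrite pmulr_rge0 // subr_ge0.
Qed.

Lemma CSc (I : finType) (z w : I -> C) :
  c2 (\sum_i z i * w i) <= (\sum_i c2 (z i)) * (\sum_i c2 (w i)).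
Proof.
apply: le_trans (CS (fun i => cmod (z i)) (fun i => cmod (w i))).
rewrite /c2; rewrite ler_pXn2r // ?nnegrE ?cmod_ge0 ?sumr_ge0 // => [|i _]; last by rewrite mulr_ge0 ?cmod_ge0.
by apply: le_trans (cmod_sum _ _) _; apply: ler_sum => i _; rewrite cmodM.
Qed.


Lemma sqrtE (x : R) : Num.sqrt x = Num.ExtraDef.sqrtr x.
Proof. by []. Qed.

Section Op.
Variable n : nat.
Variable A : 'M[C]_n.

Lemma vnormE (x : 'cV[C]_n) : vnorm x = Num.sqrt (\sum_k c2 (x k 0)).
Proof. by []. Qed.

Lemma op_hasub : has_ubound [set y : R | exists x : 'cV[C]_n, vnorm x <= 1 /\ y = vnorm (A *m x)].
Proof.
exists (Num.sqrt (\sum_i \sum_k c2 (A i k))) => y [x [x1 ->]].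
rewrite vnormE; apply: ler_wsqrtr; apply: ler_sum => i _.
have s1 : \sum_k c2 (x k 0) <= 1.
  move: x1; rewrite vnormE => h.
  have s0 : 0 <= \sum_k c2 (x k 0) by apply: sumr_ge0 => k _; exact: c2_ge0.
  rewrite -(sqr_sqrtr s0); apply: exprn_ile1 => //; exact: sqrtr_ge0.
rewrite mxE; apply: le_trans (CSc _ _) _.
rewrite -[X in _ <= X]mulr1; apply: ler_wpM2l => //.
by apply: sumr_ge0 => k _; exact: c2_ge0.
Qed.

Lemma op_ub (x : 'cV[C]_n) : vnorm x <= 1 -> vnorm (A *m x) <= opnorm A.
Proof. by move=> h; apply: ub_le_sup; [exact: op_hasub | exists x]. Qed.

Lemma op_ge0 : 0 <= opnorm A.
Proof.
apply: le_trans (op_ub (x := 0) _); first by rewrite vnormE sqrtr_ge0.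
by rewrite vnormE big1 ?sqrtr0 // => k _; rewrite mxE c20.
Qed.

Lemma K2 (z : 'I_n -> C) :
  \sum_i c2 (\sum_k A i k * z k) <= opnorm A ^+ 2 * \sum_k c2 (z k).
Proof.
set s := \sum_k c2 (z k).
have s0 : 0 <= s by apply: sumr_ge0 => k _; exact: c2_ge0.
have [s0'|sn0] := eqVneq s 0.
  have zk : forall k, z k = 0.
    move=> k; have := (@psumr_eq0P _ _ predT (fun k => c2 (z k))) (fun k _ => c2_ge0 (z k)) s0' k isT.
    by move/eqP; rewrite c2_eq0 => /eqP.
  rewrite s0' mulr0 big1 // => i _; rewrite big1 ?c20 // => k _; by rewrite zk mulr0.
have sp : 0 < s by rewrite lt_def sn0 s0.
set l := Num.sqrt s.
have lp : 0 < l by rewrite sqrtr_gt0.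
pose x : 'cV[C]_n := \col_k (z k * (l^-1)%:C).
have cx : forall k, c2 (x k 0) = c2 (z k) / s.
  move=> k; rewrite mxE c2M c2R exprVn sqr_sqrtr //.
have vx : vnorm x = 1.
  rewrite vnormE (eq_bigr _ (fun k _ => cx k)) -mulr_suml -/s divff //.
  by rewrite sqrtr1.
have := op_ub (x := x); rewrite vx lexx => /(_ isT).
rewrite vnormE => h.
have h2 : \sum_k c2 ((A *m x) k 0) <= opnorm A ^+ 2.
  have t0 : 0 <= \sum_k c2 ((A *m x) k 0) by apply: sumr_ge0 => k _; exact: c2_ge0.
  rewrite -(sqr_sqrtr t0) ler_pXn2r // ?nnegrE ?sqrtr_ge0 ?op_ge0 //.
have e : \sum_k c2 ((A *m x) k 0) = (\sum_i c2 (\sum_k A i k * z k)) / s.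
  rewrite mulr_suml; apply: eq_bigr => i _; rewrite mxE.
  have -> : \sum_j A i j * x j 0 = (\sum_k A i k * z k) * (l^-1)%:C.
    by rewrite mulr_suml; apply: eq_bigr => k _; rewrite mxE mulrA.
  by rewrite c2M c2R exprVn sqr_sqrtr.
move: h2; rewrite e ler_pdivrMr //.
Qed.

Lemma T2 (z : 'I_n -> C) :
  \sum_b c2 (\sum_a A a b * z a) <= opnorm A ^+ 2 * \sum_a c2 (z a).
Proof.
set u := fun b => \sum_a A a b * z a.
set S := \sum_b c2 (u b).
set Z := \sum_a c2 (z a).
have S0 : 0 <= S by apply: sumr_ge0 => k _; exact: c2_ge0.
have Z0 : 0 <= Z by apply: sumr_ge0 => k _; exact: c2_ge0.
pose y := fun a => \sum_b A a b * (u b)^*.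
have eS : S%:C = \sum_a z a * y a.
  rewrite rmorph_sum /=.
  transitivity (\sum_b \sum_a A a b * z a * (u b)^*).
    by apply: eq_bigr => b _; rewrite c2E mulr_suml.
  rewrite exchange_big /=; apply: eq_bigr => a _; rewrite mulr_sumr.
  by apply: eq_bigr => b _; rewrite mulrCA mulrA.
have h1 : S ^+ 2 <= Z * (opnorm A ^+ 2 * S).
  have -> : S ^+ 2 = c2 (S%:C) by rewrite c2R.
  rewrite eS; apply: le_trans (CSc _ _) _; apply: ler_wpM2l => //.
  apply: le_trans (K2 (fun b => (u b)^*)) _.
  by rewrite /S; apply: ler_wpM2l; rewrite ?sqr_ge0 // (eq_bigr _ (fun b _ => c2J (u b))).
have [->|Sn0] := eqVneq S 0; first by rewrite mulr_ge0 ?sqr_ge0.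
have Sp : 0 < S by rewrite lt_def Sn0 S0.
move: h1; rewrite expr2 mulrA [Z * _]mulrC ler_pM2r //.
Qed.

End Op.

Local Open Scope sesquilinear_scope.

Lemma trHS p q (B : 'M[C]_(p, q)) : \tr (B *m B^t*) = (\sum_i \sum_j c2 (B i j))%:C.
Proof.
rewrite /mxtrace rmorph_sum; apply: eq_bigr => i _; rewrite mxE rmorph_sum.
by apply: eq_bigr => j _; rewrite !mxE; rewrite -[RHS]/((c2 (B i j))%:C) c2E.
Qed.

Lemma trmxC_mul p q r (X : 'M[C]_(p, q)) (Y : 'M[C]_(q, r)) :
  (X *m Y)^t* = Y^t* *m X^t*.
Proof. by rewrite trmx_mul map_mxM. Qed.

Lemma HS_aux n r (Q : 'M[C]_(r, n)) (X : 'M[C]_(n, r)) :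
  Q \is unitarymx ->
  \sum_a \sum_b c2 ((X *m Q) a b) <= r%:R * opnorm (X *m Q) ^+ 2.
Proof.
move=> Qu; set A := X *m Q.
pose P := Q^t*.
have eA : A *m P *m Q = A by rewrite /A /P mulmxtVK.
have e1 : \sum_a \sum_b c2 (A a b) = \sum_a \sum_j c2 ((A *m P) a j).
  apply: (@complexI R); rewrite -!trHS.
  have e2 : A *m P *m (A *m P)^t* = A *m A^t*.
    by rewrite trmxC_mul /P trmxCK mulmxA eA.
  by rewrite e2.
rewrite e1 exchange_big /=.
have rowQ : forall j, \sum_b c2 (Q j b) = 1.
  move=> j; apply: (@complexI R); rewrite rmorph_sum rmorph1 /=.
  move/unitarymxP: Qu => /matrixP /(_ j j); rewrite !mxE eqxx /= => h; rewrite -[X in _ = X]h.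
  idtac.
  by apply: eq_bigr => b _; rewrite -[LHS]/((c2 (Q j b))%:C) c2E !mxE.
have -> : r%:R * opnorm A ^+ 2 = \sum_(j < r) opnorm A ^+ 2 by rewrite sumr_const card_ord mulr_natl.
apply: ler_sum => j _.
have -> : \sum_a c2 ((A *m P) a j) = \sum_a c2 (\sum_b A a b * (Q j b)^*).
  by apply: eq_bigr => a _; rewrite mxE; congr c2; apply: eq_bigr => b _; rewrite !mxE.
apply: le_trans (K2 _ _) _.
by rewrite (eq_bigr _ (fun b _ => c2J (Q j b))) rowQ mulr1.
Qed.

Lemma HS_rank n (A : 'M[C]_n) :
  \sum_a \sum_b c2 (A a b) <= (\rank A)%:R * opnorm A ^+ 2.
Proof.
pose Q := schmidt (row_base A).
have Qu : Q \is unitarymx by apply: schmidt_unitarymx; exact: rank_leq_col.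
have /submxP [X eX] : (A <= Q)%MS.
  by apply: submx_trans (schmidt_sub _); rewrite eq_row_base.
move: (HS_aux X Qu); rewrite -eX; exact.
Qed.

End Cplx.


Section Gen.
Variable R : realType.
Local Notation C := R[i].
Variables (V : finType) (n : nat).
Local Notation Sg := {ffun V -> 'I_n}.
Variables (N : 'M[C]_n) (lam : R).
Hypothesis opbN : forall z : 'I_n -> C,
  \sum_b c2 (\sum_c N c b * z c) <= lam ^+ 2 * \sum_c c2 (z c).

Lemma eqle (x y : R) : x = y -> x <= y.
Proof. by move->. Qed.

Lemma le_sum1 (I : finType) (F : I -> R) i : (forall j, 0 <= F j) -> F i <= \sum_j F j.
Proof.
by move=> h; rewrite (bigD1 i) //= lerDl; apply: sumr_ge0 => j _; exact: h.
Qed.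

Lemma rowb a : \sum_b c2 (N a b) <= lam ^+ 2.
Proof.
have := opbN (fun c => if c == a then 1 else 0).
have -> : \sum_c c2 (if c == a then 1 else 0 : C) = 1.
  rewrite (bigD1 a) //= eqxx big1 ?addr0 => [|c /negbTE ->]; last exact: c20.
  by rewrite -[1 : C]/((1 : R)%:C) c2R expr1n.
rewrite mulr1; apply: le_trans; apply: eqle; apply: eq_bigr => b _; congr c2.
rewrite (bigD1 a) //= eqxx mulr1 big1 ?addr0 // => c /negbTE ->; exact: mulr0.
Qed.

Variables (P : Sg -> C) (I S : {set V}) (t w : V).
Definition Zg (s : Sg) := SO I s P.

Lemma Zstay s : t \notin I -> w \notin I ->
  SO I s (fun r => P r * N (r t) (r w)) = Zg s * N (s t) (s w).
Proof.
move=> tI wI; rewrite /Zg -SO_mulr; apply: SO_ext => r ag.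
by rewrite (agree_out ag tI) (agree_out ag wI).
Qed.

Lemma Zleave s : t \notin I -> w \notin I -> t != w ->
  SO (t |: I) s (fun r => P r * N (r t) (r w)) = \sum_c N c (s w) * Zg (upd s t c).
Proof.
move=> tI wI tw; rewrite SO_add //; apply: eq_bigr => c _.
rewrite /Zg -SO_mull; apply: SO_ext => r ag.
rewrite (agree_out ag tI) (agree_out ag wI) upd_same upd_other 1?eq_sym //.
by rewrite mulrC.
Qed.

Lemma Zind : w \notin I -> (forall r c, P (upd r w c) = P r) ->
  forall s c, Zg (upd s w c) = Zg s.
Proof.
by move=> wI h s c; rewrite /Zg SO_upd //; apply: SO_ext => r _; rewrite h.
Qed.

Definition stayB s := SO S s (fun r => c2 (Zg r) * \sum_c c2 (N (r t) c)).

Lemma stay_in s :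
  SO S s (fun r => c2 (Zg r * N (r t) (r w))) <= stayB s.
Proof.
apply: SO_le => r _; rewrite c2M; apply: ler_wpM2l; first exact: c2_ge0.
exact: (@le_sum1 _ (fun c => c2 (N (r t) c)) (r w) (fun j => c2_ge0 _)).
Qed.

Lemma stay_new s : w \notin S -> t \in S -> w \notin I ->
  (forall r c, P (upd r w c) = P r) ->
  SO (w |: S) s (fun r => c2 (Zg r * N (r t) (r w))) <= stayB s.
Proof.
move=> wS tS wI Pind; rewrite SO_add //.
have tw : t != w by apply: contraNneq wS => <-.
under eq_bigr do rewrite SO_upd //.
rewrite /stayB; under [X in _ <= X]SO_ext do rewrite mulr_sumr.
rewrite SO_sum; apply: eqle; apply: eq_bigr => c _; apply: SO_ext => r _.
by rewrite (Zind wI Pind) upd_same upd_other // c2M.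
Qed.

Lemma stayB_le s : stayB s <= lam ^+ 2 * SO S s (fun r => c2 (Zg r)).
Proof.
rewrite -SO_mull; apply: SO_le => r _; rewrite mulrC.
apply: ler_wpM2r; [exact: c2_ge0 | exact: rowb].
Qed.

Lemma leave_core s : t \in S ->
  SO (S :\ t) s (fun r => lam ^+ 2 * \sum_c c2 (Zg (upd r t c))) =
  lam ^+ 2 * SO S s (fun r => c2 (Zg r)).
Proof.
move=> tS; rewrite SO_mull SO_sum; congr (_ * _).
have e := finset.setD1K tS.
rewrite -[in RHS]e SO_add ?setD11 //; apply: eq_bigr => c _.
by rewrite SO_upd // setD11.
Qed.

Lemma leave_in s : t \in S ->
  SO (S :\ t) s (fun r => c2 (\sum_c N c (r w) * Zg (upd r t c))) <=
  lam ^+ 2 * SO S s (fun r => c2 (Zg r)).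
Proof.
move=> tS; rewrite -leave_core //; apply: SO_le => r _.
apply: le_trans (opbN (fun c => Zg (upd r t c))).
exact: (@le_sum1 _ (fun b => c2 (\sum_c N c b * Zg (upd r t c))) (r w) (fun j => c2_ge0 _)).
Qed.

Lemma leave_new s : t \in S -> w \notin S -> w \notin I ->
  (forall r c, P (upd r w c) = P r) ->
  SO (w |: (S :\ t)) s (fun r => c2 (\sum_c N c (r w) * Zg (upd r t c))) <=
  lam ^+ 2 * SO S s (fun r => c2 (Zg r)).
Proof.
move=> tS wS wI Pind.
have tw : t != w by apply: contraNneq wS => <-.
have wS' : w \notin S :\ t by rewrite in_setD1 negb_and wS orbT.
rewrite -leave_core // SO_add //.
under eq_bigr do rewrite SO_upd //.
rewrite -SO_sum; apply: SO_le => r _.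
apply: le_trans (opbN (fun c => Zg (upd r t c))); apply: eqle; apply: eq_bigr => b _.
congr c2; apply: eq_bigr => c _.
by rewrite upd_same upd_comm 1?eq_sym // (Zind wI Pind).
Qed.

End Gen.


Section Walk.
Variable R : realType.
Local Notation C := R[i].
Variables (V E : finType) (src tgt : E -> V) (n : nat) (M : E -> 'M[C]_n).
Local Notation Sg := {ffun V -> 'I_n}.
Local Notation tl := (tl src tgt).
Local Notation hd := (hd src tgt).
Local Notation endv := (endv src tgt).
Variables (x0 : V) (s : seq (dart E)) (d0 : dart E).
Hypotheses (hw : walk src tgt x0 s) (he : endv x0 s = x0).

Definition Nd (d : dart E) : 'M[C]_n := if d.2 then M d.1 else (M d.1)^T.
Definition lamd (d : dart E) := opnorm (M d.1).

Lemma opbNd d (z : 'I_n -> C) :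
  \sum_b c2 (\sum_c Nd d c b * z c) <= lamd d ^+ 2 * \sum_c c2 (z c).
Proof.
rewrite /Nd /lamd; case: d.2; first exact: T2.
have := K2 (M d.1) z; apply: le_trans; apply: eqle; apply: eq_bigr => b _.
by congr c2; apply: eq_bigr => c _; rewrite mxE.
Qed.

Definition inc v (d : dart E) := (tl d == v) || (hd d == v).
Definition touched k v := has (inc v) (take k s).
Definition remaining k v := has (inc v) (drop k s).
Definition Aset k := [set v | (v == x0) || (touched k v && remaining k v)].
Definition Iset k := [set v | (v != x0) && touched k v && ~~ remaining k v].
Definition Pk k (r : Sg) := \prod_(d <- take k s) Nd d (r (tl d)) (r (hd d)).
Definition Zk k (r : Sg) := SO (Iset k) r (Pk k).
Definition Qk k (r : Sg) := SO (Aset k) r (fun t => c2 (Zk k t)).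

Lemma disjAI j v : v \in Aset j -> v \notin Iset j.
Proof.
rewrite !inE => h; apply/negP => /andP[/andP[a b] c]; move: h.
by rewrite (negbTE a) (negbTE c) andbF.
Qed.

Lemma tl_nth k : (k < size s)%N -> tl (nth d0 s k) = endv x0 (take k s).
Proof.
move=> hk; have := hw; rewrite -{1}(cat_take_drop k s) walk_cat (drop_nth d0 hk) /=.
by case/andP => _ /andP[/eqP].
Qed.

Lemma has_endv p : p != [::] -> has (inc (endv x0 p)) p.
Proof.
case/lastP: p => [//|p d] _; rewrite endv_rcons has_rcons /inc eqxx.
by rewrite orbT.
Qed.

Lemma setU1_id (T : finType) (x : T) (A : {set T}) : x \in A -> x |: A = A.
Proof. by move=> xA; apply/setP => y; rewrite in_setU1; case: eqP => // ->. Qed.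

Section Step.
Variable k : nat.
Hypothesis hk : (k < size s)%N.
Let d := nth d0 s k.
Let t := tl d.
Let w := hd d.

Lemma takeS : take k.+1 s = rcons (take k s) d.
Proof. exact: take_nth. Qed.

Lemma dropS : drop k s = d :: drop k.+1 s.
Proof. exact: drop_nth. Qed.

Lemma touchedS v : touched k.+1 v = touched k v || inc v d.
Proof. by rewrite /touched takeS has_rcons orbC. Qed.

Lemma remS v : remaining k v = inc v d || remaining k.+1 v.
Proof. by rewrite /remaining dropS. Qed.

Lemma incT : inc t d. Proof. by rewrite /inc eqxx. Qed.
Lemma incW : inc w d. Proof. by rewrite /inc eqxx orbT. Qed.

Lemma tA : t \in Aset k.
Proof.
rewrite inE; case: (posnP k) => [k0|kp].
  by rewrite /t tl_nth // k0 take0 eqxx.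
apply/orP; right; apply/andP; split; last by rewrite remS incT.
rewrite /touched /t tl_nth //; apply: has_endv.
by rewrite -size_eq0 size_take hk -lt0n.
Qed.

Lemma wA1 : w \in Aset k.+1.
Proof.
rewrite inE touchedS incW orbT /=.
have ew : w = endv x0 (take k.+1 s) by rewrite takeS endv_rcons.
case: (ltnP k.+1 (size s)) => h.
  by rewrite /remaining (drop_nth d0 h) /= /inc ew -tl_nth // eqxx orbT.
have ks : k.+1 = size s by apply/eqP; rewrite eqn_leq h hk.
by rewrite ew ks take_size he eqxx.
Qed.

Lemma tI : t \notin Iset k. Proof. by rewrite inE remS incT /= andbF. Qed.
Lemma wI : w \notin Iset k. Proof. by rewrite inE remS incW /= andbF. Qed.
Lemma wI1 : w \notin Iset k.+1. Proof. exact: disjAI wA1. Qed.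

Lemma memA v : v != t -> v != w -> (v \in Aset k.+1) = (v \in Aset k).
Proof.
move=> vt vw; have iv : inc v d = false.
  by rewrite /inc eq_sym (negbTE vt) eq_sym (negbTE vw).
by rewrite !inE touchedS remS iv orbF.
Qed.

Lemma memI v : v != t -> v != w -> (v \in Iset k.+1) = (v \in Iset k).
Proof.
move=> vt vw; have iv : inc v d = false.
  by rewrite /inc eq_sym (negbTE vt) eq_sym (negbTE vw).
by rewrite !inE touchedS remS iv orbF.
Qed.

Lemma PkS r : Pk k.+1 r = Pk k r * Nd d (r t) (r w).
Proof. by rewrite /Pk takeS big_rcons. Qed.

Lemma Pind : w \notin Aset k -> forall r c, Pk k (upd r w c) = Pk k r.
Proof.
rewrite inE negb_or remS incW /= andbT => /andP[_ nt] r c.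
rewrite /Pk; apply: eq_big_seq => d' dd.
have : ~~ inc w d' by move/hasPn: nt; apply.
rewrite /inc negb_or => /andP[a b].
by rewrite !upd_other.
Qed.

Lemma stays_eqI : t \in Aset k.+1 -> Iset k.+1 = Iset k.
Proof.
move=> tA1; apply/setP => v.
case: (eqVneq v t) => [->|vt]; first by rewrite (negbTE (disjAI tA1)) (negbTE tI).
case: (eqVneq v w) => [->|vw]; first by rewrite (negbTE wI1) (negbTE wI).
exact: memI.
Qed.

Lemma stays_eqA : t \in Aset k.+1 -> Aset k.+1 = w |: Aset k.
Proof.
move=> tA1; apply/setP => v; rewrite in_setU1.
case: (eqVneq v w) => [->|vw]; first by rewrite wA1.
case: (eqVneq v t) => [->|vt]; first by rewrite tA1 tA.
exact: memA.
Qed.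

Lemma leaves_tw : t \notin Aset k.+1 -> t != w.
Proof. by move=> h; apply: contraNneq h => ->; exact: wA1. Qed.

Lemma leaves_eqI : t \notin Aset k.+1 -> Iset k.+1 = t |: Iset k.
Proof.
move=> tA1; apply/setP => v; rewrite in_setU1.
case: (eqVneq v t) => [->|vt].
  by move: tA1; rewrite !inE touchedS incT orbT /= negb_or andbT => /andP[-> ->].
case: (eqVneq v w) => [->|vw]; first by rewrite (negbTE wI1) (negbTE wI).
exact: memI.
Qed.

Lemma leaves_eqA : t \notin Aset k.+1 -> Aset k.+1 = w |: (Aset k :\ t).
Proof.
move=> tA1; apply/setP => v; rewrite in_setU1 in_setD1.
case: (eqVneq v w) => [->|vw]; first by rewrite wA1.
case: (eqVneq v t) => [->|vt]; first by rewrite (negbTE tA1).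
exact: memA.
Qed.

Lemma Zk1_eq r : Zk k.+1 r = SO (Iset k.+1) r (fun q => Pk k q * Nd d (q t) (q w)).
Proof. by rewrite /Zk; apply: SO_ext => q _; rewrite PkS. Qed.

Lemma step_stay r : t \in Aset k.+1 ->
  Qk k.+1 r <= stayB (Nd d) (Pk k) (Iset k) (Aset k) t r.
Proof.
move=> tA1.
have eZ : forall q, Zk k.+1 q = Zg (Pk k) (Iset k) q * Nd d (q t) (q w).
  by move=> q; rewrite Zk1_eq stays_eqI // Zstay // ?tI ?wI.
rewrite /Qk (stays_eqA tA1).
under SO_ext do rewrite eZ.
case: (boolP (w \in Aset k)) => wA.
  rewrite setU1_id //; exact: stay_in.
apply: stay_new => //; [exact: tA | exact: wI | exact: Pind].
Qed.

Lemma step_leave r : t \notin Aset k.+1 ->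
  Qk k.+1 r <= lamd d ^+ 2 * Qk k r.
Proof.
move=> tA1; have tw := leaves_tw tA1.
have eZ : forall q, Zk k.+1 q = \sum_c Nd d c (q w) * Zg (Pk k) (Iset k) (upd q t c).
  by move=> q; rewrite Zk1_eq leaves_eqI // Zleave // ?tI ?wI.
rewrite /Qk (leaves_eqA tA1).
under SO_ext do rewrite eZ.
case: (boolP (w \in Aset k)) => wA.
  rewrite setU1_id; last by rewrite in_setD1 eq_sym tw.
  exact: (leave_in (opbNd d) (Pk k) (Iset k) w r tA).
apply: (leave_new (opbNd d)) => //; [exact: tA | exact: wI | exact: Pind].
Qed.

Lemma step_main r : Qk k.+1 r <= lamd d ^+ 2 * Qk k r.
Proof.
case: (boolP (t \in Aset k.+1)) => tA1; last exact: step_leave.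
apply: le_trans (step_stay r tA1) _; exact: (stayB_le (opbNd d)).
Qed.

End Step.
Lemma Qk_ge0 k r : 0 <= Qk k r.
Proof. by apply: SO_ge0 => q; exact: c2_ge0. Qed.

Lemma SO_single (T : nmodType) (r : Sg) (F : Sg -> T) :
  SO [set x0] r F = \sum_a F (upd r x0 a).
Proof.
have -> : [set x0] = x0 |: (finset.set0 : {set V}) by rewrite finset.setU0.
by rewrite SO_add ?inE //; apply: eq_bigr => a _; rewrite SO0.
Qed.

Lemma step_first r : (0 < size s)%N ->
  Qk 1 r <= \sum_a \sum_c c2 (Nd (nth d0 s 0) a c).
Proof.
move=> h0.
have t0 : tl (nth d0 s 0) = x0 by rewrite tl_nth // take0.
have tA1 : tl (nth d0 s 0) \in Aset 1 by rewrite inE t0 eqxx.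
apply: le_trans (step_stay h0 r tA1) _; apply: eqle.
have A0 : Aset 0 = [set x0].
  by apply/setP => v; rewrite !inE /touched take0 /= orbF.
have I0 : Iset 0 = finset.set0.
  by apply/setP => v; rewrite !inE /touched take0 /= andbF.
rewrite /stayB A0 I0 SO_single; apply: eq_bigr => a _.
rewrite /Zg SO0 /Pk take0 big_nil c2R expr1n mul1r t0 upd_same.
by [].
Qed.

Lemma iterQ k r : (0 < k <= size s)%N ->
  Qk k r <= Qk 1 r * \prod_(d <- take k.-1 (behead s)) lamd d ^+ 2.
Proof.
elim: k => [//|k IH] /andP[_ hk].
case: (posnP k) => [->|kp]; first by rewrite take0 big_nil mulr1.
have hk' : (k < size s)%N by [].
apply: le_trans (step_main hk' r) _.
have h2 : (k.-1 < size (behead s))%N by rewrite size_behead; lia.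
have ek := take_nth d0 h2; rewrite nth_behead prednK // in ek.
rewrite /= ek big_rcons /= mulrA mulrC; apply: ler_wpM2r; first exact: sqr_ge0.
by apply: IH; rewrite kp /=; apply: ltnW.
Qed.

Lemma walk_bound (r : Sg) : (0 < size s)%N -> (forall v, has (inc v) s) ->
  c2 (\sum_q Pk (size s) q) <=
  n%:R * (\sum_a \sum_c c2 (Nd (nth d0 s 0) a c)) * \prod_(d <- behead s) lamd d ^+ 2.
Proof.
move=> h0 hall.
have Aend : Aset (size s) = [set x0].
  by apply/setP => v; rewrite !inE /remaining drop_size /= andbF orbF.
have Iend : Iset (size s) = [set: V] :\ x0.
  by apply/setP => v; rewrite !inE /remaining /touched drop_size take_size hall /= andbT.
have e1 : \sum_q Pk (size s) q = \sum_a Zk (size s) (upd r x0 a).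
  rewrite -(SO_setT r) -(finset.setD1K (finset.in_setT x0)) SO_add ?setD11 //.
  by apply: eq_bigr => a _; rewrite /Zk Iend.
have e2 : Qk (size s) r = \sum_a c2 (Zk (size s) (upd r x0 a)).
  by rewrite /Qk Aend SO_single.
have cs : c2 (\sum_q Pk (size s) q) <= n%:R * Qk (size s) r.
  rewrite e1 e2; have := CSc (fun _ => 1) (fun a => Zk (size s) (upd r x0 a)).
  under eq_bigr do rewrite mul1r.
  move=> h; apply: le_trans h _; apply: ler_wpM2r.
    by apply: sumr_ge0 => a _; exact: c2_ge0.
  rewrite -[1 : C]/((1 : R)%:C) (eq_bigr _ (fun a _ => c2R 1)) expr1n sumr_const card_ord.
  by [].
apply: le_trans cs _; rewrite -mulrA; apply: ler_wpM2l; first exact: ler0n.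
have := iterQ (k := size s) r; rewrite h0 leqnn => /(_ isT).
have -> : take (size s).-1 (behead s) = behead s by rewrite -size_behead take_size.
move=> h; apply: le_trans h _; apply: ler_wpM2r; last exact: step_first.
by apply: prodr_ge0 => d _; exact: sqr_ge0.
Qed.

End Walk.


Section Final.
Variable R : realType.
Local Notation C := R[i].
Variables (V E : finType) (src tgt : E -> V) (n : nat) (M : E -> 'M[C]_n).
Hypothesis conn : forall u v, connect (und_adj src tgt) u v.
Hypothesis ev : forall v, ~~ odd (deg src tgt v).

Definition HS (A : 'M[C]_n) := \sum_a \sum_b c2 (A a b).

Lemma HS_row (A : 'M[C]_n) : HS A <= n%:R * opnorm A ^+ 2.
Proof.
rewrite /HS; have -> : n%:R * opnorm A ^+ 2 = \sum_(a < n) opnorm A ^+ 2.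
  by rewrite sumr_const card_ord mulr_natl.
by apply: ler_sum => a _; apply: (rowb (T2 A)).
Qed.

Lemma HS_tr (A : 'M[C]_n) : HS A^T = HS A.
Proof. by rewrite /HS exchange_big; apply: eq_bigr => a _; apply: eq_bigr => b _; rewrite mxE. Qed.

Lemma main_bound (f : E) (n0 : (0 < n)%N) :
  c2 (TG src tgt M) <= n%:R * HS (M f) * \prod_(e | e != f) opnorm (M e) ^+ 2.
Proof.
have [x [s [ws es us alls [d [s' [sd df]]]]]] := euler_exists conn ev f.
pose r : {ffun V -> 'I_n} := [ffun _ => Ordinal n0].
have hall : forall v, has (inc src tgt v) s.
  move=> v; case: (eqVneq v x) => [->|vx].
    by apply/hasP; exists d; rewrite ?sd ?mem_head //; move: ws; rewrite sd /= /inc => /andP[-> _].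
  case/connectP: (conn v x) => p pp lp.
  case: p pp lp => [_ /= lp|u p' /= /andP[hvu _] _]; first by move: vx; rewrite lp eqxx.
  case/existsP: hvu => e he.
  have /mapP [dd dds dde] := alls e.
  have hv : (src e == v) || (tgt e == v).
    by case/orP: he => /andP[a b]; rewrite ?a ?b ?orbT.
  apply/hasP; exists dd => //; rewrite /inc /tl /hd -dde.
  by case: dd.2 => //=; rewrite orbC.
have sz : (0 < size s)%N by rewrite sd.
have := walk_bound M d ws es r sz hall.
have eT : \sum_q Pk src tgt M s (size s) q = TG src tgt M.
  rewrite /TG; apply: eq_bigr => q _; rewrite /Pk take_size.
  transitivity (\prod_(dd <- s) M dd.1 (q (src dd.1)) (q (tgt dd.1))).
    by apply: eq_bigr => dd _; rewrite /Nd /tl /hd; case: dd.2; rewrite ?mxE.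
  rewrite -(big_map fst predT (fun e => M e (q (src e)) (q (tgt e)))).
  apply: perm_big; apply: uniq_perm => //; first exact: index_enum_uniq.
  by move=> e; rewrite alls mem_index_enum.
rewrite eT sd /= => h; apply: le_trans h _.
have eHS : \sum_a \sum_c c2 (Nd M d a c) = HS (M f).
  by rewrite /Nd -df; case: d.2 => //; rewrite -/(HS _) HS_tr.
rewrite eHS; apply: eqle; congr (_ * _).
transitivity (\prod_(e <- map fst s') opnorm (M e) ^+ 2); first by rewrite big_map.
rewrite -[in RHS]big_filter.
apply: perm_big; move: us; rewrite sd /= df => /andP[fn us'].
apply: uniq_perm => //; first by rewrite filter_uniq ?index_enum_uniq.
move=> e; rewrite mem_filter mem_index_enum andbT /=.
case: (eqVneq e f) => [->|ef]; first by rewrite (negbTE fn).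
by move: (alls e); rewrite sd /= inE df (negbTE ef).
Qed.

End Final.

Lemma from_c2 (R : realType) (z : R[i]) (X : R) : 0 <= X -> c2 z <= X ^+ 2 -> cmod z <= X.
Proof. by move=> X0; rewrite /c2 ler_pXn2r // nnegrE ?cmod_ge0. Qed.

Theorem theorem7p9 (R : realType) (V E : finType) (src tgt : E -> V) (n : nat)
  (M : E -> 'M[R[i]]_n) :
  weakly_connected src tgt ->
  (forall v : V, ~~ odd (deg src tgt v)) ->
  cmod (TG src tgt M) <= n%:R * \prod_(e : E) opnorm (M e) /\
  (forall (f : E) (r : nat), \rank (M f) = r ->
     cmod (TG src tgt M) <= Num.sqrt ((r * n)%:R) * \prod_(e : E) opnorm (M e)).
Proof.
move=> [V0 conn] ev.
have P0 : 0 <= \prod_(e : E) opnorm (M e) by apply: prodr_ge0 => e _; exact: op_ge0.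
case: (posnP n) => [n0|np].
  case/card_gt0P: V0 => v _.
  have T0 : TG src tgt M = 0.
    rewrite /TG big1 // => q _; exfalso; case: (q v) => m hm; have : (m < 0)%N by rewrite -n0. by [].
  rewrite T0 cmod0; split; first by rewrite mulr_ge0.
  by move=> f r _; rewrite mulr_ge0 // sqrtr_ge0.
have key : forall f : E, forall X, 0 <= X -> HS (M f) <= X * opnorm (M f) ^+ 2 ->
    cmod (TG src tgt M) <= Num.sqrt (X * n%:R) * \prod_(e : E) opnorm (M e).
  move=> f X X0 hX; apply: from_c2; first by rewrite mulr_ge0 ?sqrtr_ge0.
  apply: le_trans (main_bound M conn ev f np) _.
  rewrite [in X in _ <= X](bigD1 f) //= exprMn exprMn sqr_sqrtr ?mulr_ge0 ?ler0n // prodrXl.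
  set Q := (\prod_(e | e != f) opnorm (M e)) ^+ 2.
  have Q0 : 0 <= Q by rewrite /Q sqr_ge0.
  apply: le_trans (_ : n%:R * (X * opnorm (M f) ^+ 2) * Q <= _).
    by apply: ler_wpM2r => //; apply: ler_wpM2l => //; exact: ler0n.
  by apply: eqle; rewrite /GRing.exp /=; ring.
split; last first.
  move=> f r hr; rewrite natrM; apply: key; first exact: ler0n.
  by rewrite -hr; exact: HS_rank.
case: (pickP (fun _ : E => true)) => [f _|hE].
  have := key f n%:R (ler0n _ _) (HS_row (M f)).
  by rewrite -expr2 sqrtr_sqr ger0_norm ?ler0n.
have pE : forall F : E -> R[i], \prod_(e : E) F e = 1 by move=> F; rewrite big_pred0.
have pE' : \prod_(e : E) opnorm (M e) = 1 by rewrite big_pred0.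
have V1 : #|V| = 1%N.
  have : (#|V| <= 1)%N.
    apply/card_le1_eqP => u v _ _; case/connectP: (conn v u) => [[|a p] /= pp ->] //.
    by case/andP: pp => /existsP [e _]; move: (hE e).
  by move: V0; lia.
have -> : TG src tgt M = n%:R.
  rewrite /TG (eq_bigr (fun _ => 1)) => [|q _]; last exact: pE.
  by rewrite sumr_const card_ffun card_ord V1 expn1.
rewrite pE' mulr1.
have -> : (n%:R : R[i]) = (n%:R : R)%:C by rewrite rmorph_nat.
by rewrite cmodR ger0_norm // ler0n.
Qed.
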